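(* Let $J$ be either a closed interval or a circle, and let $\gamma:J\to\mathbb{R}^n$ be a continuous map of bounded variation with total variation $l$. Then $\mathcal{H}^2(\gamma(J)\times\gamma(J))\leq(\pi/2)\,l^2$. In particular, $\gamma(J)\times\gamma(J)\subset\mathbb{R}^{2n}$ has finite $2$-dimensional Hausdorff measure.
   Context: $\mathcal{H}^2$ denotes $2$-dimensional Hausdorff measure, normalized so that $\mathcal{H}^2(E)=\lim_{\varepsilon\to 0}\inf\{(\pi/4)\sum_j \mathrm{diam}(A_j)^2 : E\subset\bigcup_j A_j,\ \mathrm{diam}(A_j)<\varepsilon\}$ (countable covers). *)

(* Defs.v *)
From HB Require Import structures.
From mathcomp Require Import all_boot all_order all_algebra.
From mathcomp Require Import all_classical all_reals all_analysis.
Set Implicit Arguments. Unset Strict Implicit. Unset Printing Implicit Defensive.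
Import Order.TTheory GRing.Theory Num.Theory.
Import numFieldNormedType.Exports.
Local Open Scope classical_set_scope.
Local Open Scope ring_scope.

Definition enorm {R : realType} {n : nat} (v : 'rV[R]_n) : R :=
  Num.sqrt (\sum_(i < n) v ord0 i ^+ 2).

(* Variation of a vector-valued map along a partition s of [a,b]
   (same convention as MathComp-Analysis' [variation] in numfun.v,
   with the Euclidean norm instead of the absolute value). *)
Definition vvariation {R : realType} {n : nat} (a b : R) (g : R -> 'rV[R]_n)
    (s : seq R) : R :=
  let F := g \o nth b (a :: s) in
  \sum_(0 <= k < size s) enorm (F k.+1 - F k).

Definition vvariations {R : realType} {n : nat} (a b : R) (g : R -> 'rV[R]_n)
  : set R := [set vvariation a b g s | s in itv_partition a b].

Definition vtotal_variation {R : realType} {n : nat} (a b : R)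
    (g : R -> 'rV[R]_n) : \bar R :=
  ereal_sup [set (x%:E)%E | x in vvariations a b g].

(* Euclidean diameter of a subset of R^m (diam of the empty set is 0). *)
Definition ediam {R : realType} {m : nat} (A : set 'rV[R]_m) : \bar R :=
  ereal_sup [set d : \bar R | d = 0%E \/
     exists x y, A x /\ A y /\ d = ((enorm (x - y))%:E)%E].

Definition hcontent2 {R : realType} {m : nat} (eps : R) (E : set 'rV[R]_m)
  : \bar R :=
  ereal_inf [set z : \bar R | exists A : nat -> set 'rV[R]_m,
     (forall j, (ediam (A j) < eps%:E)%E) /\ E `<=` \bigcup_j A j /\
     z = ((pi / 4)%:E * \sum_(0 <= j <oo) (ediam (A j) * ediam (A j)))%E].

(* 2-dimensional Hausdorff measure: the limit as eps -> 0+ of the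
   (nonincreasing in eps) contents, i.e. their supremum over eps > 0. *)
Definition hausdorff2 {R : realType} {m : nat} (E : set 'rV[R]_m) : \bar R :=
  ereal_sup [set hcontent2 eps E | eps in [set eps : R | 0 < eps]].

Definition selfprod {R : realType} {n : nat} (X : set 'rV[R]_n)
  : set 'rV[R]_(n + n) :=
  [set row_mx x y | x in X & y in X].

(* Main.v *)
Require Import Defs.
From HB Require Import structures.
From mathcomp Require Import all_boot all_order all_algebra.
From mathcomp Require Import all_classical all_reals all_analysis.
From mathcomp Require Import ring lra zify.
Import Order.TTheory GRing.Theory Num.Theory.
Import numFieldNormedType.Exports.
Import archimedean.Num.Def archimedean.Num.Theory.
Local Open Scope classical_set_scope.
Local Open Scope ring_scope.

Module Helpers.
Set Implicit Arguments. Unset Strict Implicit. Unset Printing Implicit Defensive.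


Section Enorm.
Variable R : realType.

Lemma enorm_ge0 n (v : 'rV[R]_n) : 0 <= enorm v.
Proof. exact: sqrtr_ge0. Qed.

Lemma enorm_sq n (v : 'rV[R]_n) : enorm v ^+ 2 = \sum_(i < n) v ord0 i ^+ 2.
Proof. by rewrite /enorm sqr_sqrtr // sumr_ge0 // => i _; rewrite sqr_ge0. Qed.

Lemma enormB n (u v : 'rV[R]_n) : enorm (u - v) = enorm (v - u).
Proof.
rewrite /enorm; congr Num.sqrt; apply: eq_bigr => i _.
by rewrite !mxE -sqrrN opprB.
Qed.

Lemma CS n (u v : 'I_n -> R) :
  (\sum_i u i * v i) ^+ 2 <= (\sum_i u i ^+ 2) * (\sum_i v i ^+ 2).
Proof.
set A := \sum_i u i ^+ 2; set B := \sum_i v i ^+ 2; set C := \sum_i u i * v i.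
have B0 : 0 <= B by rewrite sumr_ge0 // => i _; rewrite sqr_ge0.
have [Bz|Bp] := eqVneq B 0.
  have v0 : forall i, v i = 0.
    move=> i; apply/eqP; rewrite -sqrf_eq0; apply/eqP.
    by move/eqP: Bz; rewrite psumr_eq0 => [/allP/(_ i (mem_index_enum _))/eqP|j _]; rewrite ?sqr_ge0.
  rewrite /C big1; first by rewrite Bz mulr0 expr0n.
  by move=> i _; rewrite v0 mulr0.
have Bpos : 0 < B by rewrite lt0r Bp.
have H : 0 <= \sum_i (B * u i - C * v i) ^+ 2 by rewrite sumr_ge0 // => i _; rewrite sqr_ge0.
have E : \sum_i (B * u i - C * v i) ^+ 2 = B * (A * B - C ^+ 2).
  rewrite (eq_bigr (fun i => B ^+ 2 * u i ^+ 2 - (2 * B * C) * (u i * v i) + C ^+ 2 * v i ^+ 2)); last first.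
    by move=> i _; rewrite sqrrB; ring.
  rewrite big_split /= big_split /= sumrN -!mulr_sumr -/A -/B -/C; ring.
by rewrite -subr_ge0 -(pmulr_rge0 _ Bpos) -E.
Qed.

Lemma enormD n (u v : 'rV[R]_n) : enorm (u + v) <= enorm u + enorm v.
Proof.
rewrite -(ler_pXn2r (_ : 0 < 2)%N) ?nnegrE ?addr_ge0 ?enorm_ge0 //.
rewrite sqrrD !enorm_sq.
rewrite (eq_bigr (fun i => u ord0 i ^+ 2 + 2 * (u ord0 i * v ord0 i) + v ord0 i ^+ 2)); last first.
  by move=> i _; rewrite !mxE; ring.
rewrite big_split big_split /= -mulr_sumr.
rewrite lerD2r lerD2l.
suff h : \sum_(i < n) u ord0 i * v ord0 i <= enorm u * enorm v.
  by rewrite mulr2n; lra.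
have := CS (fun i => u ord0 i) (fun i => v ord0 i).
rewrite -!enorm_sq -exprMn => h.
apply: le_trans (ler_norm _) _.
by rewrite -(ler_pXn2r (_ : 0 < 2)%N) ?nnegrE ?mulr_ge0 ?enorm_ge0 // real_normK // num_real.
Qed.

End Enorm.


Section B.
Variable R : realType.

Lemma coord_le_norm n (v : 'rV[R]_n) i : `|v ord0 i| <= `|v|.
Proof.
rewrite [X in _ <= X]/Num.norm /= mx_normrE.
exact: (le_bigmax _ _ (ord0, i)).
Qed.

Lemma enorm_le_mx n (v : 'rV[R]_n) : enorm v <= n.+1%:R * `|v|.
Proof.
rewrite -(ler_pXn2r (_ : 0 < 2)%N) ?nnegrE ?mulr_ge0 ?enorm_ge0 // enorm_sq.
apply: (@le_trans _ _ (\sum_(i < n) `|v|^+2)).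
  apply: ler_sum => i _; rewrite -real_normK ?num_real //.
  by rewrite lerXn2r ?nnegrE ?coord_le_norm.
rewrite sumr_const card_ord exprMn -[X in X <= _]mulr_natl; apply: ler_wpM2r; rewrite ?sqr_ge0 //.
rewrite -natrX ler_nat; nia.
Qed.

Lemma within_cont_eps (A : set R) n (g : R -> 'rV[R]_n) :
  {within A, continuous g} -> forall x, A x -> forall e, 0 < e ->
  exists2 r, 0 < r & forall y, A y -> `|x - y| < r -> enorm (g x - g y) <= e.
Proof.
move=> /subspace_continuousP cg x Ax e e0.
have e'0 : 0 < e / n.+1%:R by rewrite divr_gt0.
have /cvgrPdist_lt /(_ _ e'0) := cg x Ax.
rewrite /prop_near1 /within /= => /nbhs_ballP [r r0 H].
exists r => // y Ay xy.
have := H y; rewrite /ball /= => /(_ xy Ay) h.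
have h2 := enorm_le_mx (g x - g y).
have h3 : n.+1%:R * `|g x - g y| <= e.
  by rewrite mulrC -ler_pdivlMr ?ltr0n // ltW.
exact: le_trans h2 h3.
Qed.
End B.

Section C.
Variable R : realType.

Lemma unif_cont (a b : R) n (g : R -> 'rV[R]_n) :
  {within `[a, b], continuous g} -> forall w, 0 < w ->
  exists2 eta, 0 < eta & forall x y, `[a, b]%classic x -> `[a, b]%classic y ->
     `|x - y| < eta -> enorm (g x - g y) <= w.
Proof.
move=> cg w w0.
have /compact_near_coveringP /near_covering_withinP ncw := @segment_compact R a b.
have H : \forall eta \near (0:R)^'+, `[a, b]%classic `<=`
   (fun x => forall y, `[a, b]%classic y -> `|x - y| < eta -> enorm (g x - g y) <= w).
  apply: ncw => x Kx.
  have w2 : 0 < w / 2 by rewrite divr_gt0.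
  have [r r0 Hr] := within_cont_eps cg Kx w2.
  have r2 : 0 < r / 2 by rewrite divr_gt0.
  exists (ball x (r/2), [set i | i < r / 2]); first split.
  + exact: nbhsx_ballx.
  + exact: nbhs_right_lt.
  case=> x' i [/= bx' ir] Kx' y Ky x'y.
  have xx' : `|x - x'| < r/2 by move: bx'; rewrite /ball.
  have xy : `|x - y| < r.
    apply: le_lt_trans (ler_distD x' x y) _.
    by rewrite (splitr r) ltrD //; apply: lt_trans ir.
  have rr : r / 2 < r by lra.
  have h1 : enorm (g x' - g x) <= w / 2.
    by rewrite enormB; apply: Hr x' Kx' (lt_trans xx' rr).
  have h2 := Hr y Ky xy.
  have := enormD (g x' - g x) (g x - g y).
  rewrite addrA subrK => h3.
  apply: le_trans h3 _; rewrite (splitr w) lerD //.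
have [eta [Heta eta0]] := filter_ex (filterI H (nbhs_right_gt 0)).
  exists eta => // x y Kx Ky xy; exact: Heta x Kx y Ky xy.
Qed.

End C.


Section Part.
Variable R : realType.
Variables (a b : R) (K : nat).
Hypothesis ab : a < b.
Hypothesis K0 : (0 < K)%N.

Definition hh := (b - a) / K%:R.
Definition tt (k : nat) := a + k%:R * hh.
Definition ss := mkseq (fun k => tt k.+1) K.

Lemma hh_gt0 : 0 < hh.
Proof. by rewrite /hh divr_gt0 ?subr_gt0 ?ltr0n. Qed.

Lemma tt0 : tt 0 = a.
Proof. by rewrite /tt mul0r addr0. Qed.

Lemma ttK : tt K = b.
Proof.
rewrite /tt /hh mulrC -mulrA mulVf ?mulr1 ?pnatr_eq0 -?lt0n //; lra.
Qed.

Lemma tt_lt i j : (i < j)%N -> tt i < tt j.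
Proof.
move=> ij; rewrite /tt ltrD2l ltr_pM2r ?hh_gt0 // ltr_nat //.
Qed.

Lemma tt_le i j : (i <= j)%N -> tt i <= tt j.
Proof.
rewrite leq_eqVlt => /orP[/eqP -> //|/tt_lt/ltW //].
Qed.

Lemma tt_in k : (k <= K)%N -> a <= tt k <= b.
Proof.
move=> kK; rewrite -{1}tt0 -ttK !tt_le //.
Qed.

Lemma nth_ss k : (k <= K)%N -> nth b (a :: ss) k = tt k.
Proof.
case: k => [|k] kK /=; first by rewrite tt0.
by rewrite nth_mkseq.
Qed.

Lemma ss_part : itv_partition a b ss.
Proof.
split.
  have -> : path <%O a ss = sorted <%O (a :: ss) by [].
  have -> : a :: ss = mkseq tt K.+1.
    have e := iotaDl 1 0 K; rewrite addn0 in e.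
    by rewrite /ss /mkseq /= tt0 e -map_comp.
  rewrite /mkseq; apply: (homo_sorted (e := ltn)); last exact: iota_ltn_sorted.
  by move=> i j; exact: tt_lt.
rewrite (last_nth a) (set_nth_default b); last by rewrite /= size_mkseq.
by rewrite /= size_mkseq -/ss -[nth _ _ _]/(nth b (a :: ss) K) nth_ss // ttK.
Qed.

Lemma vvar_ss n (g : R -> 'rV[R]_n) :
  vvariation a b g ss = \sum_(0 <= k < K) enorm (g (tt k.+1) - g (tt k)).
Proof.
rewrite /vvariation size_mkseq big_nat_cond [RHS]big_nat_cond.
apply: eq_bigr => k /andP[/andP[_ kK] _] /=.
rewrite -[nth b ss k]/(nth b (a :: ss) k.+1) !nth_ss //; exact: ltnW.
Qed.
End Part.


Section TV.
Variable R : realType.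

Lemma vvar_ge0 (a b : R) n (g : R -> 'rV[R]_n) s : 0 <= vvariation a b g s.
Proof. by rewrite /vvariation sumr_ge0 // => k _; rewrite enorm_ge0. Qed.

Lemma tv_fin (a b : R) n (g : R -> 'rV[R]_n) : a <= b ->
  (vtotal_variation a b g < +oo)%E ->
  [/\ 0 <= fine (vtotal_variation a b g),
      (forall s, itv_partition a b s -> vvariation a b g s <= fine (vtotal_variation a b g)) &
      vtotal_variation a b g = (fine (vtotal_variation a b g))%:E].
Proof.
move=> ab tvoo.
have ub s : itv_partition a b s -> ((vvariation a b g s)%:E <= vtotal_variation a b g)%E.
  move=> sp; apply: ereal_sup_ubound; exists (vvariation a b g s) => //.
  by exists s.
have [s0 s0p] : exists s, itv_partition a b s.
  move: ab; rewrite le_eqVlt => /orP[/eqP ->|ab]; first by exists [::].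
  by exists [:: b]; split => //=; rewrite ab.
have tv0 : (0 <= vtotal_variation a b g)%E.
  by apply: le_trans (ub _ s0p); rewrite lee_fin vvar_ge0.
have tvf : vtotal_variation a b g \is a fin_num by rewrite ge0_fin_numE.
split.
- by rewrite fine_ge0.
- by move=> s sp; rewrite -lee_fin fineK // ub.
- by rewrite fineK.
Qed.
End TV.

Lemma enorm0 (R : realType) n : enorm (0 : 'rV[R]_n) = 0.
Proof.
by rewrite /enorm big1 ?sqrtr0 // => i _; rewrite mxE expr0n.
Qed.

Section Cover.
Variable R : realType.
Variables (a b : R) (n : nat) (g : R -> 'rV[R]_n) (l w eta : R) (K : nat).
Hypothesis ab : a < b.
Hypothesis Hl : forall s, itv_partition a b s -> vvariation a b g s <= l.
Hypothesis Heta : forall x y, `[a, b]%classic x -> `[a, b]%classic y ->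
     `|x - y| < eta -> enorm (g x - g y) <= w.
Hypothesis K0 : (0 < K)%N.
Hypothesis hK : hh a b K < eta.

Let t := tt a b K.
Definition cc k := enorm (g (t k.+1) - g (t k)).
Definition SS k := \sum_(0 <= j < k) cc j.

Lemma cc_ge0 k : 0 <= cc k.
Proof. exact: enorm_ge0. Qed.

Lemma SS_mono i j : (i <= j)%N -> SS i <= SS j.
Proof.
move=> ij; rewrite /SS [X in _ <= X](@big_cat_nat _ _ _ i) //= lerDl.
by rewrite sumr_ge0 // => k _; exact: cc_ge0.
Qed.

Lemma SS_K : SS K <= l.
Proof.
have := Hl (ss_part ab K0); rewrite vvar_ss //.
Qed.

Lemma chain i j : (i <= j)%N -> enorm (g (t j) - g (t i)) <= SS j - SS i.
Proof.
elim: j => [|j IH]; first by rewrite leqn0 => /eqP ->; rewrite subrr enorm0 subrr.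
rewrite leq_eqVlt => /orP[/eqP ->|]; first by rewrite !subrr enorm0.
rewrite ltnS => ij.
have := enormD (g (t j.+1) - g (t j)) (g (t j) - g (t i)).
rewrite addrA subrK => h; apply: le_trans h _.
rewrite [SS j.+1]/SS big_nat_recr //= -/(SS j) -/(cc j).
have := IH ij; lra.
Qed.

Lemma t_step k : t k.+1 - t k = hh a b K.
Proof. by rewrite /t /tt -addn1 natrD; ring. Qed.

Lemma piece_in k x : (k < K)%N -> t k <= x <= t k.+1 -> `[a, b]%classic x.
Proof.
move=> kK /andP[h1 h2].
have /andP[h3 _] := tt_in ab K0 (ltnW kK).
have /andP[_ h4] := tt_in ab K0 kK.
rewrite /= in_itv /=; apply/andP; split; [exact: le_trans h3 h1|exact: le_trans h2 h4].
Qed.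

Lemma piece_close k x y : (k < K)%N -> t k <= x <= t k.+1 -> t k <= y <= t k.+1 ->
  enorm (g x - g y) <= w.
Proof.
move=> kK hx hy; apply: Heta; [exact: piece_in hx|exact: piece_in hy|].
apply: le_lt_trans hK; rewrite -(t_step k).
move: hx hy => /andP[? ?] /andP[? ?].
rewrite ler_norml; apply/andP; split; lra.
Qed.

Lemma group_diam c k1 k2 x1 x2 : (k1 <= k2)%N -> (k2 < K)%N -> SS k2 - SS k1 < c ->
  t k1 <= x1 <= t k1.+1 -> t k2 <= x2 <= t k2.+1 ->
  enorm (g x1 - g x2) <= c + 2 * w.
Proof.
move=> k12 k2K Sc h1 h2.
have w0 : 0 <= w.
  by apply: le_trans (piece_close k2K h2 h2); rewrite subrr enorm0.
have c0 : 0 < c.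
  by apply: le_lt_trans Sc; rewrite subr_ge0 SS_mono.
move: k12; rewrite leq_eqVlt => /orP[/eqP eq|lt12].
  by subst k2; apply: le_trans (piece_close k2K h1 h2) _; lra.
have k1K : (k1.+1 < K)%N by apply: leq_trans k2K; rewrite ltnS.
have e1 : enorm (g x1 - g (t k1.+1)) <= w.
  apply: piece_close (ltnW k1K) h1 _.
  by rewrite lexx andbT tt_le // leqnSn.
have e2 : enorm (g (t k1.+1) - g (t k2)) <= SS k2 - SS k1.
  rewrite enormB; apply: le_trans (chain lt12) _.
  have := SS_mono (leqnSn k1); lra.
have e3 : enorm (g (t k2) - g x2) <= w.
  by apply: piece_close k2K _ h2; rewrite lexx /= tt_le // leqnSn.
have := enormD (g x1 - g (t k1.+1)) (g (t k1.+1) - g x2).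
rewrite addrA subrK => h; apply: le_trans h _.
have := enormD (g (t k1.+1) - g (t k2)) (g (t k2) - g x2).
rewrite addrA subrK => h'.
lra.
Qed.

Definition PG c G := [set y | exists k, [/\ (k < K)%N, G%:R * c <= SS k, SS k < G.+1%:R * c &
   exists2 x, t k <= x <= t k.+1 & y = g x]].

Lemma SS_ge0 k : 0 <= SS k.
Proof. by rewrite sumr_ge0 // => j _; exact: cc_ge0. Qed.

Lemma PG_cover c x : 0 < c -> a <= x <= b ->
  exists2 G, (G < (truncn (l / c)).+1)%N & PG c G (g x).
Proof.
move=> c0 /andP[ax xb].
have h0 := hh_gt0 ab K0.
set q := truncn ((x - a) / hh a b K).
have xa0 : 0 <= (x - a) / hh a b K by rewrite divr_ge0 // ?subr_ge0 // ltW.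
have /andP[q1 q2] := truncn_itv xa0.
set k := minn q K.-1.
have kK : (k < K)%N by rewrite /k; lia.
have tkx : t k <= x.
  apply: (@le_trans _ _ (t q)); first by apply: tt_le; rewrite /k; lia.
  by rewrite /t /tt -lerBrDl -ler_pdivlMr.
have xtk : x <= t k.+1.
  have [qK|qK] := leqP q K.-1.
    have -> : k = q by rewrite /k; lia.
    rewrite /t /tt -lerBlDl -ler_pdivrMr //; exact: ltW.
  have -> : k.+1 = K by rewrite /k; lia.
  by rewrite /t ttK.
set G := truncn (SS k / c).
have Sc0 : 0 <= SS k / c by rewrite divr_ge0 ?SS_ge0 // ltW.
have /andP[G1 G2] := truncn_itv Sc0.
exists G.
  rewrite ltnS /G; apply: le_truncn; rewrite ler_pM2r ?invr_gt0 //.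
  apply: le_trans SS_K; exact/SS_mono/ltnW.
exists k; split => //.
- by rewrite -ler_pdivlMr.
- by rewrite -ltr_pdivrMr.
- by exists x => //; apply/andP.
Qed.

Lemma PG_diam c G y z : PG c G y -> PG c G z -> enorm (y - z) <= c + 2 * w.
Proof.
move=> [k1 [k1K G1 G1' [x1 h1 ->]]] [k2 [k2K G2 G2' [x2 h2 ->]]].
have [k12|k21] := leqP k1 k2.
  apply: group_diam k12 k2K _ h1 h2; lra.
rewrite enormB; apply: group_diam (ltnW k21) k1K _ h2 h1; lra.
Qed.
End Cover.


Lemma curve_cover (R : realType) (a b : R) n (g : R -> 'rV[R]_n) (l : R) :
  a <= b -> {within `[a, b], continuous g} ->
  (forall s, itv_partition a b s -> vvariation a b g s <= l) ->
  forall d, 0 < d -> exists M : nat, exists D : R, exists P : nat -> set 'rV[R]_n,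
   [/\ 0 <= D, D <= d, M%:R * D <= l + d,
       (forall x, a <= x <= b -> exists2 G, (G < M)%N & P G (g x)) &
       (forall G y z, P G y -> P G z -> enorm (y - z) <= D)].
Proof.
move=> ab cg Hl d d0.
move: ab; rewrite le_eqVlt => /orP[/eqP eab|ab].
  subst b.
  have l0 : 0 <= l.
    have := Hl [::] (conj (erefl _) (eqxx a)).
    by rewrite /vvariation /= big_nil.
  exists 1%N, 0, (fun _ => [set g a]); split.
  - by [].
  - exact: ltW.
  - rewrite mul1r; lra.
  - move=> x /andP[h1 h2]; exists 0%N => //.
    by have -> : x = a by apply/eqP; rewrite eq_le h1 h2.
  - by move=> _ y z -> ->; rewrite subrr enorm0.
have l0 : 0 <= l.
  apply: le_trans (Hl [:: b] _); first exact: vvar_ge0.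
  by split => //=; rewrite ab.
pose c := d / 2.
have c0 : 0 < c by rewrite divr_gt0.
pose w := c * d / (4 * (l + c)).
have lc0 : 0 < l + c by lra.
have w0 : 0 < w by rewrite /w divr_gt0 ?mulr_gt0.
have [eta eta0 Heta] := unif_cont cg w0.
pose K := (truncn ((b - a) / eta)).+1.
have K0 : (0 < K)%N by [].
have hK : hh a b K < eta.
  rewrite /hh ltr_pdivrMr ?ltr0n // mulrC -ltr_pdivrMr //.
  exact: truncnS_gt.
exists (truncn (l / c)).+1, (c + 2 * w), (PG a b g K c).
have wd : w <= d / 4.
  rewrite /w ler_pdivrMr ?mulr_gt0 //.
  have -> : d / 4 * (4 * (l + c)) = d * (l + c) by field.
  rewrite mulrC ler_pM2l //; lra.
split.
- lra.
- rewrite /c; lra.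
- have lc : 0 <= l / c by rewrite divr_ge0 // ltW.
  have /andP[t1 _] := truncn_itv lc.
  have eq : (l / c + 1) * (c + 2 * w) = l + d.
    rewrite /w /c; field.
    by apply/andP; split; apply/eqP; lra.
  rewrite -eq -natr1; apply: ler_wpM2r; [lra|lra].
- by move=> x hx; exact: (PG_cover ab Hl K0 hK c0 hx).
- by move=> G y z; exact: (PG_diam ab Heta K0 hK).
Qed.


Section E.
Variable R : realType.

Lemma enorm_row_mx n1 n2 (u : 'rV[R]_n1) (v : 'rV[R]_n2) :
  enorm (row_mx u v) = Num.sqrt (enorm u ^+ 2 + enorm v ^+ 2).
Proof.
rewrite !enorm_sq /enorm big_split_ord /=.
by congr (Num.sqrt (_ + _)); apply: eq_bigr => i _; rewrite ?row_mxEl ?row_mxEr.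
Qed.

Lemma ediam_ge0 m (A : set 'rV[R]_m) : (0 <= ediam A)%E.
Proof. by apply: ereal_sup_ubound; left. Qed.

Lemma ediam_le m (A : set 'rV[R]_m) B : 0 <= B ->
  (forall x y, A x -> A y -> enorm (x - y) <= B) -> (ediam A <= B%:E)%E.
Proof.
move=> B0 H; apply: ub_ereal_sup => d [->|[x [y [Ax [Ay ->]]]]].
  by rewrite lee_fin.
by rewrite lee_fin H.
Qed.


Lemma hcontent_bound m (X : set 'rV[R]_m) (M : nat) (D eps : R)
    (P : nat -> set 'rV[R]_m) :
  0 <= D -> 2 * D < eps ->
  (forall y, X y -> exists2 G, (G < M)%N & P G y) ->
  (forall G y z, P G y -> P G z -> enorm (y - z) <= D) ->
  (hcontent2 eps (selfprod X) <= ((pi / 2) * (M%:R * D) ^+ 2)%:E)%E.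
Proof.
move=> D0 Deps cov diam.
pose B := Num.sqrt (D ^+ 2 + D ^+ 2).
have B0 : 0 <= B by exact: sqrtr_ge0.
have BB : B ^+ 2 = D ^+ 2 + D ^+ 2 by rewrite sqr_sqrtr // addr_ge0 // sqr_ge0.
have Beps : B < eps.
  apply: le_lt_trans Deps.
  rewrite -(ler_pXn2r (_ : 0 < 2)%N) ?nnegrE ?mulr_ge0 // BB; nra.
pose Q j := if (j < M * M)%N then
   [set row_mx y z | y in P (j %/ M)%N & z in P (j %% M)%N] else set0.
have dQ j : (ediam (Q j) <= (if (j < M * M)%N then B else 0)%:E)%E.
  rewrite /Q; case: ifP => _; last by apply: ediam_le => // x y [].
  apply: ediam_le => // x y [y1 Py1 [z1 Pz1 <-]] [y2 Py2 [z2 Pz2 <-]].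
  rewrite opp_row_mx add_row_mx enorm_row_mx ler_sqrt ?addr_ge0 ?sqr_ge0 //.
  have d1 := diam _ _ _ Py1 Py2; have d2 := diam _ _ _ Pz1 Pz2.
  have e1 := enorm_ge0 (y1 - y2); have e2 := enorm_ge0 (z1 - z2); nra.
apply: (@le_trans _ _ ((pi/4)%:E * \sum_(0 <= j <oo) (ediam (Q j) * ediam (Q j)))%E).
  apply: ereal_inf_lbound; exists Q; split; [|split; [|reflexivity]].
  - move=> j; apply: le_lt_trans (dQ j) _.
    by rewrite lte_fin; case: ifP => _; [exact: Beps|lra].
  - move=> _ [y Xy [z Xz <-]].
    have [G1 G1M PG1] := cov y Xy; have [G2 G2M PG2] := cov z Xz.
    exists (G1 * M + G2)%N => //.
    rewrite /Q ifT; last by nia.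
    rewrite divnMDl ?modnMDl ?divn_small ?modn_small ?addn0 //; last by lia.
    by exists y => //; exists z.
pose h j := ((if (j < M * M)%N then B ^+ 2 else 0)%:E : \bar R).
have fh j : (ediam (Q j) * ediam (Q j) <= h j)%E.
  have := dQ j; rewrite /h; case: ifP => _ dq.
    by rewrite expr2 EFinM; apply: lee_pmul => //; exact: ediam_ge0.
  have -> : ediam (Q j) = 0%E by apply/eqP; rewrite eq_le dq ediam_ge0.
  by rewrite mule0.
have S1 : (\sum_(0 <= j <oo) (ediam (Q j) * ediam (Q j)) <= \sum_(0 <= j <oo) h j)%E.
  apply: lee_nneseries => // i _ _.
  by apply: mule_ge0; exact: ediam_ge0.
have S2 : (\sum_(0 <= j <oo) h j = ((M * M)%:R * B ^+ 2)%:E)%E.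
  rewrite (nneseries_split 0 (M * M)); last first.
    by move=> k _; rewrite /h lee_fin; case: ifP => _; rewrite ?sqr_ge0.
  rewrite eseries0 ?adde0; last by move=> i; rewrite add0n /h => Hi _; rewrite ltnNge Hi.
  rewrite add0n big_nat_cond (eq_bigr (fun _ => (B ^+ 2)%:E)); last first.
    by move=> i /andP[/andP[_ Hi] _]; rewrite /h Hi.
  rewrite -big_nat_cond sumEFin sumr_const_nat subn0.
  by rewrite mulr_natl.
apply: le_trans (lee_wpmul2l _ S1) _; first by rewrite lee_fin mulr_ge0 // ?pi_ge0.
rewrite S2 -EFinM lee_fin BB natrM le_eqVlt; by apply/orP; left; apply/eqP; field.
Qed.
End E.


Lemma interval_case (R : realType) n (a b : R) (g : R -> 'rV[R]_n) :
  a <= b -> {within `[a, b], continuous g} ->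
  (vtotal_variation a b g < +oo)%E ->
  (hausdorff2 (selfprod (g @` `[a, b])) <=
        ((pi / 2) * fine (vtotal_variation a b g) ^+ 2)%:E)%E.
Proof.
move=> ab cg tvoo.
have [l0 Hl _] := tv_fin ab tvoo.
set l := fine (vtotal_variation a b g) in l0 Hl *.
rewrite /hausdorff2; apply: ub_ereal_sup => _ [eps /= eps0 <-].
apply/lee_addgt0Pr => e e0.
have pi0 : 0 < pi :> R := pi_gt0 R.
have k0 : 0 < pi * (2 * l + 1) by rewrite mulr_gt0 //; lra.
pose d := Num.min (eps / 4) (Num.min 1 (e / (pi * (2 * l + 1)))).
have d0 : 0 < d by rewrite !lt_min !divr_gt0 //=; lra.
have d1 : d <= eps / 4 by rewrite ge_min lexx.
have d2 : d <= 1 by rewrite ge_min ge_min lexx orbT.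
have d3 : d <= e / (pi * (2 * l + 1)) by rewrite ge_min ge_min lexx !orbT.
have [M [D [P [D0 Dd MD cov diam]]]] := curve_cover ab cg Hl d0.
have X := @hcontent_bound R n (g @` `[a, b]) M D eps P D0 _ _ diam.
apply: le_trans (X _ _) _.
- lra.
- move=> _ [x xab <-]; apply: cov.
  by move: xab; rewrite /= in_itv /=.
rewrite -EFinD lee_fin.
have MD0 : 0 <= M%:R * D by rewrite mulr_ge0.
have h1 : (M%:R * D) ^+ 2 <= (l + d) ^+ 2 by rewrite lerXn2r // ?nnegrE //; lra.
have h2 : pi * (d * (2 * l + 1)) <= e.
  rewrite (_ : pi * (d * (2 * l + 1)) = d * (pi * (2 * l + 1))); last by ring.
  by rewrite -ler_pdivlMr.
nra.
Qed.


Lemma periodic_range (R : realType) n (T : R) (g : R -> 'rV[R]_n) :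
  0 < T -> (forall t, g (t + T) = g t) -> range g = g @` `[0, T].
Proof.
move=> T0 gT.
have gN (m : nat) x : g (x + m%:R * T) = g x.
  elim: m x => [|m IH] x; first by rewrite mul0r addr0.
  by rewrite [m.+1%:R]mulrSr mulrDl mul1r addrA gT IH.
have gZ (z : int) x : g (x + z%:~R * T) = g x.
  case: z => m; first exact: gN.
  rewrite NegzE mulrNz mulNr -(gN m.+1 (x + _)).
  by rewrite -addrA addNr addr0.
apply/seteqP; split => [_ [t _ <-]|_ [t _ <-]]; last by exists t.
have Tr : t / T \is Num.real by exact: num_real.
have /andP[f1 f2] := real_floor_itv Tr.
exists (t - (floor (t / T))%:~R * T).
  rewrite /= in_itv /=; apply/andP; split.
    by rewrite subr_ge0 -ler_pdivlMr.
  have f3 : t < ((floor (t / T))%:~R + 1) * T.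
    by rewrite -ltr_pdivrMr //; move: f2; rewrite intrD.
  lra.
by rewrite -(gZ (floor (t / T))) subrK.
Qed.

End Helpers.
Import Helpers.

Theorem lemma5p1 (R : realType) (n : nat) :
  (* J = [a,b] a closed interval *)
  (forall (a b : R) (g : R -> 'rV[R]_n),
     a <= b ->
     {within `[a, b], continuous g} ->
     (vtotal_variation a b g < +oo)%E ->
     (hausdorff2 (selfprod (g @` `[a, b])) <=
        ((pi / 2) * fine (vtotal_variation a b g) ^+ 2)%:E)%E /\
     (hausdorff2 (selfprod (g @` `[a, b])) < +oo)%E) /\
  (* J = a circle R/(TZ), i.e. g is T-periodic on R *)
  (forall (T : R) (g : R -> 'rV[R]_n),
     0 < T ->
     (forall t, g (t + T) = g t) ->
     continuous g ->
     (vtotal_variation 0 T g < +oo)%E ->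
     (hausdorff2 (selfprod (range g)) <=
        ((pi / 2) * fine (vtotal_variation 0 T g) ^+ 2)%:E)%E /\
     (hausdorff2 (selfprod (range g)) < +oo)%E).
Proof.
split.
- move=> a b g ab cg tv; split; first exact: interval_case.
  apply: le_lt_trans (interval_case ab cg tv) _; exact: ltry.
- move=> T g T0 gT cg tv; rewrite (periodic_range T0 gT).
  have cg' : {within `[0, T], continuous g} := continuous_subspaceT cg.
  have T0' : 0 <= T by exact: ltW.
  split; first exact: interval_case.
  apply: le_lt_trans (interval_case T0' cg' tv) _; exact: ltry.
Qed.
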